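(* Let $d\ge3$ and let $X,Y\in M_d(\mathbb{C})$ be diagonal matrices such that the pair $(X,Y)$ is generic. Then the matrix $H(X,Y)$ is positive definite, where $H(X,Y)$ is the hermitian matrix of order $2d^2$ given by $H=H_1-\tfrac12(H_2+H_3)+\tfrac14H_4$ with $$H_1=\begin{bmatrix}\|X\|^2&\operatorname{tr}(X^\dagger Y)\\ \operatorname{tr}(Y^\dagger X)&\|Y\|^2\end{bmatrix}\otimes I_{d^2},\qquad H_2=\begin{bmatrix}X^\dagger X&X^\dagger Y\\ Y^\dagger X&Y^\dagger Y\end{bmatrix}\otimes I_d,$$ $$H_3=\begin{bmatrix}I_d\otimes X^*X^T&I_d\otimes X^*Y^T\\ I_d\otimes Y^*X^T&I_d\otimes Y^*Y^T\end{bmatrix},\qquad H_4=\begin{bmatrix}\tilde X^*\tilde X^T&\tilde X^*\tilde Y^T\\ \tilde Y^*\tilde X^T&\tilde Y^*\tilde Y^T\end{bmatrix}.$$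
   Context: A pair $(X,Y)$ of matrices in $M_d(\mathbb{C})$ is generic if $X$ and $Y$ are linearly independent and some linear combination of $X$ and $Y$ is nonsingular. $Z^*$ is the entrywise complex conjugate, $Z^T$ the transpose, $Z^\dagger$ the conjugate transpose, $\|Z\|^2=\operatorname{tr}(Z^\dagger Z)$, $I_m$ the identity matrix of order $m$, and $A\otimes B=[a_{ij}B]$ for $A=[a_{ij}]$. For a matrix $Z$, $\tilde Z$ is the column vector obtained by stacking the columns of $Z$ one below the other, starting with the first. *)

(* Defs.v *)
From HB Require Import structures.
From mathcomp Require Import all_boot all_order all_algebra.
From mathcomp Require Import complex mxtens.
From mathcomp Require Import Rstruct.
From Stdlib Require Import Rdefinitions.
Set Implicit Arguments. Unset Strict Implicit. Unset Printing Implicit Defensive.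
Import Order.TTheory GRing.Theory Num.Theory.
Local Open Scope ring_scope.

Notation CC := (Rdefinitions.R[i]).

Definition mconj {m n} (Z : 'M[CC]_(m, n)) : 'M[CC]_(m, n) := map_mx Num.conj Z.
Definition adj {m n} (Z : 'M[CC]_(m, n)) : 'M[CC]_(n, m) := (mconj Z)^T.
Definition fnorm2 {n} (Z : 'M[CC]_n) : CC := \tr (adj Z *m Z).

(* Kronecker product A (x) B = [a_ij B]  (mathcomp real_closed's tensmx,
   whose index (i,k) is i * p + k). *)
Definition kron {m n p q} (A : 'M[CC]_(m, n)) (B : 'M[CC]_(p, q)) :
  'M[CC]_(m * p, n * q) := tensmx A B.

(* tilde Z : stacking the columns of Z, first column first;
   entry (j * d + i) is Z i j. *)
Definition colstack {d} (Z : 'M[CC]_d) : 'cV[CC]_(d * d) :=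
  \col_k Z (mxtens_unindex k).2 (mxtens_unindex k).1.

Definition lin_indep2 {d} (X Y : 'M[CC]_d) : Prop :=
  forall a b : CC, a *: X + b *: Y = 0 -> a = 0 /\ b = 0.
Definition generic_pair {d} (X Y : 'M[CC]_d) : Prop :=
  lin_indep2 X Y /\ exists a b : CC, \det (a *: X + b *: Y) != 0.

Definition posdef {n} (A : 'M[CC]_n) : Prop :=
  A = adj A /\ forall v : 'cV[CC]_n, v != 0 -> 0 < (adj v *m A *m v) 0 0.

Section H.
Variables (d : nat) (X Y : 'M[CC]_d).
Local Notation N := (d * d)%N.

Definition H1 : 'M[CC]_(N + N) :=
  block_mx ((fnorm2 X) *: (1%:M : 'M[CC]_N)) ((\tr (adj X *m Y)) *: 1%:M)
           ((\tr (adj Y *m X)) *: 1%:M) ((fnorm2 Y) *: 1%:M).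
(* [X^dag X, X^dag Y; Y^dag X, Y^dag Y] (x) I_d, written blockwise:
   (block matrix) (x) I_d has blocks (block) (x) I_d. *)
Definition H2 : 'M[CC]_(N + N) :=
  block_mx (kron (adj X *m X) (1%:M : 'M[CC]_d)) (kron (adj X *m Y) (1%:M : 'M[CC]_d))
           (kron (adj Y *m X) (1%:M : 'M[CC]_d)) (kron (adj Y *m Y) (1%:M : 'M[CC]_d)).
Definition H3 : 'M[CC]_(N + N) :=
  block_mx (kron (1%:M : 'M[CC]_d) (mconj X *m X^T)) (kron (1%:M : 'M[CC]_d) (mconj X *m Y^T))
           (kron (1%:M : 'M[CC]_d) (mconj Y *m X^T)) (kron (1%:M : 'M[CC]_d) (mconj Y *m Y^T)).
Definition H4 : 'M[CC]_(N + N) :=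
  block_mx (mconj (colstack X) *m (colstack X)^T) (mconj (colstack X) *m (colstack Y)^T)
           (mconj (colstack Y) *m (colstack X)^T) (mconj (colstack Y) *m (colstack Y)^T).
Definition Hmat : 'M[CC]_(N + N) := H1 - 2^-1 *: (H2 + H3) + 4^-1 *: H4.
End H.

(* Main.v *)
Require Import Defs.
From HB Require Import structures.
From mathcomp Require Import all_boot all_order all_algebra.
From mathcomp Require Import complex mxtens Rstruct.
From mathcomp Require Import ring.
Set Implicit Arguments. Unset Strict Implicit. Unset Printing Implicit Defensive.
Import Order.TTheory GRing.Theory Num.Theory.
Local Open Scope ring_scope.

Lemma sum_deltaP (n : nat) (i : 'I_n) (F : 'I_n -> CC) :
  (forall j, j != i -> F j = 0) -> \sum_j F j = F i.
Proof.
move=> H; rewrite (bigD1 i) //= big1 ?addr0 // => j /H //.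
Qed.

Lemma nsq_ge0 (x : CC) : 0 <= x^* * x.
Proof. by rewrite mulrC mul_conjC_ge0. Qed.

Lemma nsq_eq0 (x : CC) : (x^* * x == 0) = (x == 0).
Proof. by rewrite mulrC mul_conjC_eq0. Qed.

Lemma det2 (a1 b1 a2 b2 u w : CC) :
  a1 * u + b1 * w = 0 -> a2 * u + b2 * w = 0 -> (u != 0) || (w != 0) ->
  a1 * b2 - a2 * b1 = 0.
Proof.
move=> e1 e2 /orP [] nz.
  have: u * (a1 * b2 - a2 * b1) = 0.
    have ->: u * (a1 * b2 - a2 * b1) = b2 * (a1 * u + b1 * w) - b1 * (a2 * u + b2 * w) by ring.
    by rewrite e1 e2 !mulr0 subr0.
  by move/eqP; rewrite mulf_eq0 (negbTE nz) /= => /eqP.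
have: w * (a1 * b2 - a2 * b1) = 0.
  have ->: w * (a1 * b2 - a2 * b1) = a1 * (a2 * u + b2 * w) - a2 * (a1 * u + b1 * w) by ring.
  by rewrite e1 e2 !mulr0 subr0.
by move/eqP; rewrite mulf_eq0 (negbTE nz) /= => /eqP.
Qed.

Lemma third_index (d : nat) (p q : 'I_d) : (3 <= d)%N -> exists r : 'I_d, (r != p) && (r != q).
Proof.
move=> d3; apply/existsP; apply: contraTT d3 => /existsPn H.
have sub : [set: 'I_d] \subset [set p; q].
  apply/subsetP => x _; move: (H x); rewrite negb_and !negbK !inE.
  by case/orP => ->; rewrite ?orbT.
move: (subset_leq_card sub); rewrite cardsT card_ord cards2 -ltnNge.
by case: (p != q) => /= h; apply: leq_ltn_trans h _.
Qed.

Definition zf (d : nat) (a b : 'I_d -> CC) (U W : 'I_d -> 'I_d -> CC) j i k :=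
  a j * U i k + b j * W i k.

Definition cf (d : nat) (i j k : 'I_d) : CC := ((i != j) + (k != j))%:R.

Lemma key_zero (d : nat) (a b : 'I_d -> CC) (U W : 'I_d -> 'I_d -> CC) :
  (3 <= d)%N -> (forall j, (a j != 0) || (b j != 0)) ->
  (forall al be, (forall j, a j * al + b j * be = 0) -> al = 0 /\ be = 0) ->
  (forall i k j : 'I_d, (i != j) || (k != j) -> zf a b U W j i k = 0) ->
  \sum_i zf a b U W i i i = 0 ->
  forall i k, U i k = 0 /\ W i k = 0.
Proof.
move=> d3 G1 G2 Hz0 Hs.
have Hz : forall i k j : 'I_d, (i != j) || (k != j) -> a j * U i k + b j * W i k = 0 := Hz0.
have Hd : forall p, zf a b U W p p p = 0.
  move=> p; apply/eqP; apply/negP => nzp.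
  have nzuw : forall q, zf a b U W q q q != 0 -> (U q q != 0) || (W q q != 0).
    move=> q; apply: contraTT; rewrite /zf negb_or !negbK => /andP [/eqP -> /eqP ->].
    by rewrite /zf !mulr0 addr0 eqxx.
  have others : forall q, q != p -> zf a b U W q q q = 0.
    move=> q qp; apply/eqP; apply/negP => nzq.
    have [r /andP [rp rq]] := third_index p q d3.
    have all0 : forall j, a j * b r + b j * (- a r) = 0.
      move=> j; rewrite mulrN [b j * a r]mulrC.
      case: (eqVneq j p) => [-> | jp].
        apply: (@det2 _ _ _ _ (U q q) (W q q)); last by apply: nzuw; apply/negP.
          by apply: (Hz q q p); rewrite qp.
        by apply: (Hz q q r); rewrite (eq_sym q r) rq.
      apply: (@det2 _ _ _ _ (U p p) (W p p)); last by apply: nzuw; apply/negP.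
        by apply: (Hz p p j); rewrite (eq_sym p j) jp.
      by apply: (Hz p p r); rewrite (eq_sym p r) rp.
    have [br ar] := G2 _ _ all0.
    by move/eqP: ar; rewrite oppr_eq0 => /eqP ar; move: (G1 r); rewrite br ar eqxx.
  move: Hs; rewrite (bigD1 p) //= big1 ?addr0 => [|q qp]; last exact: others.
  by move=> h; apply: nzp; apply/eqP.
move=> i k; apply: G2 => j.
rewrite -/(zf a b U W j i k); case: (eqVneq i k) => [<- | ik].
  case: (eqVneq i j) => [-> | ij]; first exact: Hd.
  by apply: Hz; rewrite ij.
by apply: Hz; case: (eqVneq i j) => [<- | //]; rewrite eq_sym ik orbT.
Qed.

Lemma sum_neq (n : nat) (i : 'I_n) (f : 'I_n -> CC) :
  \sum_j (i != j)%:R * f j = \sum_j f j - f i.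
Proof.
rewrite [in RHS](bigD1 i) //= (bigD1 i) //= eqxx mul0r add0r addrC addrK.
by apply: eq_bigr => j ji; rewrite eq_sym ji mul1r.
Qed.

Lemma two_neq0 : (2 : CC) != 0.
Proof. by rewrite pnatr_eq0. Qed.

Lemma Qdecomp (d : nat) (z : 'I_d -> 'I_d -> 'I_d -> CC) :
  \sum_i \sum_k \sum_j (z j i k)^* * z j i k
  - 2^-1 * (\sum_i \sum_k (z i i k)^* * z i i k + \sum_i \sum_k (z k i k)^* * z k i k)
  = 2^-1 * \sum_i \sum_k \sum_j cf i j k * ((z j i k)^* * z j i k).
Proof.
rewrite -big_split !mulr_sumr -sumrB; apply: eq_bigr => i _.
rewrite -big_split !mulr_sumr -sumrB; apply: eq_bigr => k _.
set f := fun j => (z j i k)^* * z j i k.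
have -> : \sum_j cf i j k * ((z j i k)^* * z j i k) = \sum_j (i != j)%:R * f j + \sum_j (k != j)%:R * f j.
  by rewrite -big_split; apply: eq_bigr => j _; rewrite /cf natrD mulrDl.
rewrite !sum_neq -/(f i) -/(f k).
have h2 := two_neq0.
rewrite /f /=; by field.
Qed.

Lemma cf_ge0 (d : nat) (i j k : 'I_d) : 0 <= cf i j k.
Proof. by rewrite /cf ler0n. Qed.

Lemma Q_ge0 (d : nat) (z : 'I_d -> 'I_d -> 'I_d -> CC) (s : CC) :
  0 <= 2^-1 * \sum_i \sum_k \sum_j cf i j k * ((z j i k)^* * z j i k) + 4^-1 * (s^* * s).
Proof.
apply: addr_ge0; apply: mulr_ge0; rewrite ?invr_ge0 ?ler0n ?nsq_ge0 //.
do 3! (apply: sumr_ge0 => ? _); apply: mulr_ge0.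
- exact: cf_ge0.
- exact: nsq_ge0.
Qed.

Lemma Q_eq0 (d : nat) (z : 'I_d -> 'I_d -> 'I_d -> CC) (s : CC) :
  2^-1 * \sum_i \sum_k \sum_j cf i j k * ((z j i k)^* * z j i k) + 4^-1 * (s^* * s) = 0 ->
  (forall i k j : 'I_d, (i != j) || (k != j) -> z j i k = 0) /\ s = 0.
Proof.
have i2 : (2 : CC)^-1 != 0 by rewrite invr_eq0 two_neq0.
have i4 : (4 : CC)^-1 != 0 by rewrite invr_eq0 pnatr_eq0.
have g3 : forall i k j : 'I_d, 0 <= cf i j k * ((z j i k)^* * z j i k).
  by move=> i k j; apply: mulr_ge0; [exact: cf_ge0 | exact: nsq_ge0].
move/eqP; rewrite paddr_eq0; first last.
- by apply: mulr_ge0; rewrite ?invr_ge0 ?ler0n ?nsq_ge0.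
- apply: mulr_ge0; rewrite ?invr_ge0 ?ler0n //.
  by do 3! (apply: sumr_ge0 => ? _); apply: g3.
rewrite mulf_eq0 (negbTE i2) /= mulf_eq0 (negbTE i4) /= nsq_eq0 => /andP [/eqP S /eqP ->].
split=> // i k j nz.
have S1 := psumr_eq0P (fun i _ => sumr_ge0 _ (fun k _ => sumr_ge0 _ (fun j _ => g3 i k j))) S.
have S2 := psumr_eq0P (fun k _ => sumr_ge0 _ (fun j _ => g3 i k j)) (S1 i isT).
have S3 := psumr_eq0P (fun j _ => g3 i k j) (S2 k isT).
move/eqP: (S3 j isT); rewrite mulf_eq0 nsq_eq0 => /orP [|/eqP //].
rewrite /cf pnatr_eq0 addn_eq0 !eqb0 => /andP [/negPn ij /negPn kj].
by rewrite ij kj in nz.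
Qed.

Definition qf {n} (M : 'M[CC]_n) (u w : 'cV[CC]_n) : CC := (adj u *m M *m w) 0 0.

Lemma sum_idx (d : nat) (F : 'I_(d * d) -> CC) :
  \sum_r F r = \sum_i \sum_k F (mxtens_index (i, k)).
Proof.
rewrite pair_big /=.
rewrite (reindex (@mxtens_index d d)) /=; last first.
  by exists (@mxtens_unindex d d) => x _; rewrite (mxtens_indexK, mxtens_unindexK).
by apply: eq_bigr => -[i k].
Qed.

Lemma qfE n (M : 'M[CC]_n) u w :
  qf M u w = \sum_c \sum_r (u r 0)^* * M r c * w c 0.
Proof.
rewrite /qf mxE; apply: eq_bigr => c _; rewrite mxE mulr_suml.
by apply: eq_bigr => r _; rewrite !mxE.
Qed.

Lemma adj_col n1 n2 (u : 'cV[CC]_n1) (w : 'cV[CC]_n2) :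
  adj (col_mx u w) = row_mx (adj u) (adj w).
Proof. by rewrite /adj /mconj map_col_mx tr_col_mx. Qed.

Lemma qf_block n1 n2 (A : 'M[CC]_(n1, n1)) (B : 'M[CC]_(n1, n2)) (C : 'M[CC]_(n2, n1))
   (D : 'M[CC]_(n2, n2)) (u : 'cV[CC]_n1) (w : 'cV[CC]_n2) :
  (adj (col_mx u w) *m block_mx A B C D *m col_mx u w) 0 0 =
  (adj u *m A *m u) 0 0 + (adj u *m B *m w) 0 0 + (adj w *m C *m u) 0 0 + (adj w *m D *m w) 0 0.
Proof.
rewrite adj_col mul_row_block mul_row_col !mulmxDl !mxE. ring.
Qed.

Lemma qf_lin n (A B C D : 'M[CC]_n) (c e : CC) v :
  qf (A - c *: (B + C) + e *: D) v v = qf A v v - c * (qf B v v + qf C v v) + e * qf D v v.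
Proof.
rewrite /qf !mulmxDr !mulmxDl mulmxN mulNmx. rewrite -!scalemxAr -!scalemxAl !mulmxDr !mulmxDl !mxE. done.
Qed.

Definition UU (d : nat) (u : 'cV[CC]_(d * d)) (i k : 'I_d) : CC := u (mxtens_index (i, k)) 0.

Lemma adj_diag d (p : 'rV[CC]_d) : adj (diag_mx p) = diag_mx (map_mx Num.conj p).
Proof.
apply/matrixP => i j; rewrite !mxE eq_sym; case: eqP => [->|_]; first by rewrite !mulr1n.
by rewrite !mulr0n rmorph0.
Qed.

Lemma mconj_diag d (p : 'rV[CC]_d) : mconj (diag_mx p) = diag_mx (map_mx Num.conj p).
Proof.
apply/matrixP => i j; rewrite !mxE; case: eqP => [->|_]; first by rewrite !mulr1n.
by rewrite !mulr0n rmorph0.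
Qed.

Lemma diag_off d (p : 'rV[CC]_d) i j : i != j -> diag_mx p i j = 0.
Proof. by rewrite mxE => /negbTE ->; rewrite mulr0n. Qed.

Lemma diag_on d (p : 'rV[CC]_d) i : diag_mx p i i = p 0 i.
Proof. by rewrite mxE eqxx mulr1n. Qed.

Lemma qf_scal1 d (c : CC) (u w : 'cV[CC]_(d * d)) :
  qf (c *: 1%:M) u w = c * \sum_i \sum_k (UU u i k)^* * UU w i k.
Proof.
transitivity (c * \sum_r (u r 0)^* * w r 0); last by rewrite sum_idx.
rewrite qfE mulr_sumr; apply: eq_bigr => r _.
rewrite (@sum_deltaP _ r) => [|s sr]; last by rewrite !mxE (negbTE sr) ?mulr0n ?mulr0 ?mul0r.
by rewrite !mxE eqxx mulr1n; ring.
Qed.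

Lemma qf_kron d (M B : 'M[CC]_d) (u w : 'cV[CC]_(d * d)) :
  (forall i j, i != j -> M i j = 0) -> (forall i j, i != j -> B i j = 0) ->
  qf (kron M B) u w = \sum_i \sum_k (UU u i k)^* * (M i i * B k k) * UU w i k.
Proof.
move=> hM hB; rewrite qfE sum_idx; apply: eq_bigr => i _; apply: eq_bigr => k _.
rewrite sum_idx (@sum_deltaP _ i) => [|i' ii]; last first.
  by apply: big1 => k' _; rewrite /kron tensmxE (hM _ _ ii) mul0r mulr0 mul0r.
rewrite (@sum_deltaP _ k) => [|k' kk]; last first.
  by rewrite /kron tensmxE (hB k' k kk) mulr0 mulr0 mul0r.
by rewrite /kron tensmxE.
Qed.

Lemma qf_colstack d (p q : 'rV[CC]_d) (u w : 'cV[CC]_(d * d)) :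
  qf (mconj (colstack (diag_mx p)) *m (colstack (diag_mx q))^T) u w =
  (\sum_i p 0 i * UU u i i)^* * (\sum_i q 0 i * UU w i i).
Proof.
have cs : forall (r : 'rV[CC]_d) (x : 'cV[CC]_(d * d)),
    \sum_c colstack (diag_mx r) c 0 * x c 0 = \sum_i r 0 i * UU x i i.
  move=> r x; rewrite sum_idx; apply: eq_bigr => i _.
  rewrite (@sum_deltaP _ i) => [|k ki]; last by rewrite mxE mxtens_indexK /= diag_off ?mul0r.
  by rewrite mxE mxtens_indexK /= diag_on.
rewrite -!cs rmorph_sum mulr_suml qfE exchange_big; apply: eq_bigr => r _.
rewrite mulr_sumr; apply: eq_bigr => c _.
rewrite [in LHS]mxE big_ord1 [(colstack (diag_mx q))^T _ _]mxE.
rewrite [mconj _ _ _]mxE rmorphM /=; ring.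
Qed.

Lemma H1part d (p q : 'rV[CC]_d) (u w : 'cV[CC]_(d * d)) :
  qf (\tr (adj (diag_mx p) *m diag_mx q) *: 1%:M) u w =
  \sum_i \sum_k \sum_j (p 0 j * UU u i k)^* * (q 0 j * UU w i k).
Proof.
rewrite qf_scal1 adj_diag mulmx_diag mxtrace_diag mulr_sumr; apply: eq_bigr => i _.
rewrite mulr_sumr; apply: eq_bigr => k _; rewrite mulr_suml; apply: eq_bigr => j _.
by rewrite !mxE rmorphM /=; ring.
Qed.

Lemma H2part d (p q : 'rV[CC]_d) (u w : 'cV[CC]_(d * d)) :
  qf (kron (adj (diag_mx p) *m diag_mx q) 1%:M) u w =
  \sum_i \sum_k (p 0 i * UU u i k)^* * (q 0 i * UU w i k).
Proof.
rewrite adj_diag mulmx_diag qf_kron; first last.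
- by move=> i j ij; rewrite mxE (negbTE ij).
- exact: diag_off.
apply: eq_bigr => i _; apply: eq_bigr => k _.
by rewrite diag_on !mxE eqxx mulr1n rmorphM /=; ring.
Qed.

Lemma H3part d (p q : 'rV[CC]_d) (u w : 'cV[CC]_(d * d)) :
  qf (kron 1%:M (mconj (diag_mx p) *m (diag_mx q)^T)) u w =
  \sum_i \sum_k (p 0 k * UU u i k)^* * (q 0 k * UU w i k).
Proof.
rewrite mconj_diag tr_diag_mx mulmx_diag qf_kron; first last.
- exact: diag_off.
- by move=> i j ij; rewrite mxE (negbTE ij).
apply: eq_bigr => i _; apply: eq_bigr => k _.
by rewrite diag_on !mxE eqxx mulr1n rmorphM /=; ring.
Qed.

Lemma combine d (a b : 'rV[CC]_d) (u w : 'cV[CC]_(d * d)) :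
  let z := zf (fun j => a 0 j) (fun j => b 0 j) (UU u) (UU w) in
  (\sum_i \sum_k \sum_j (a 0 j * UU u i k)^* * (a 0 j * UU u i k) +
   \sum_i \sum_k \sum_j (a 0 j * UU u i k)^* * (b 0 j * UU w i k) +
   \sum_i \sum_k \sum_j (b 0 j * UU w i k)^* * (a 0 j * UU u i k) +
   \sum_i \sum_k \sum_j (b 0 j * UU w i k)^* * (b 0 j * UU w i k))
  - 2^-1 * ((\sum_i \sum_k (a 0 i * UU u i k)^* * (a 0 i * UU u i k) +
             \sum_i \sum_k (a 0 i * UU u i k)^* * (b 0 i * UU w i k) +
             \sum_i \sum_k (b 0 i * UU w i k)^* * (a 0 i * UU u i k) +
             \sum_i \sum_k (b 0 i * UU w i k)^* * (b 0 i * UU w i k)) +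
            (\sum_i \sum_k (a 0 k * UU u i k)^* * (a 0 k * UU u i k) +
             \sum_i \sum_k (a 0 k * UU u i k)^* * (b 0 k * UU w i k) +
             \sum_i \sum_k (b 0 k * UU w i k)^* * (a 0 k * UU u i k) +
             \sum_i \sum_k (b 0 k * UU w i k)^* * (b 0 k * UU w i k)))
  + 4^-1 * ((\sum_i a 0 i * UU u i i)^* * (\sum_i a 0 i * UU u i i) +
            (\sum_i a 0 i * UU u i i)^* * (\sum_i b 0 i * UU w i i) +
            (\sum_i b 0 i * UU w i i)^* * (\sum_i a 0 i * UU u i i) +
            (\sum_i b 0 i * UU w i i)^* * (\sum_i b 0 i * UU w i i))
  = \sum_i \sum_k \sum_j (z j i k)^* * z j i k
    - 2^-1 * (\sum_i \sum_k (z i i k)^* * z i i k + \sum_i \sum_k (z k i k)^* * z k i k)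
    + 4^-1 * ((\sum_i z i i i)^* * (\sum_i z i i i)).
Proof.
move=> z.
have e1 : forall f1 f2 f3 f4 : 'I_d -> 'I_d -> 'I_d -> CC,
   \sum_i \sum_k \sum_j f1 i k j + \sum_i \sum_k \sum_j f2 i k j +
   \sum_i \sum_k \sum_j f3 i k j + \sum_i \sum_k \sum_j f4 i k j =
   \sum_i \sum_k \sum_j (f1 i k j + f2 i k j + f3 i k j + f4 i k j).
  move=> f1 f2 f3 f4; rewrite -!big_split; apply: eq_bigr => i _.
  rewrite -!big_split; apply: eq_bigr => k _; by rewrite -!big_split.
have e2 : forall f1 f2 f3 f4 : 'I_d -> 'I_d -> CC,
   \sum_i \sum_k f1 i k + \sum_i \sum_k f2 i k +
   \sum_i \sum_k f3 i k + \sum_i \sum_k f4 i k =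
   \sum_i \sum_k (f1 i k + f2 i k + f3 i k + f4 i k).
  move=> f1 f2 f3 f4; rewrite -!big_split; apply: eq_bigr => i _; by rewrite -!big_split.
rewrite e1 !e2.
have -> : \sum_i z i i i = \sum_i a 0 i * UU u i i + \sum_i b 0 i * UU w i i.
  by rewrite -big_split.
congr (_ - _ * (_ + _) + _).
- apply: eq_bigr => i _; apply: eq_bigr => k _; apply: eq_bigr => j _.
  by rewrite /z /zf rmorphD /=; ring.
- apply: eq_bigr => i _; apply: eq_bigr => k _.
  by rewrite /z /zf rmorphD /=; ring.
- apply: eq_bigr => i _; apply: eq_bigr => k _.
  by rewrite /z /zf rmorphD /=; ring.
- by rewrite rmorphD /=; ring.
Qed.

Lemma adjK m n (A : 'M[CC]_(m, n)) : adj (adj A) = A.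
Proof. by apply/matrixP => i j; rewrite !mxE conjCK. Qed.

Lemma adjM m n p (A : 'M[CC]_(m, n)) (B : 'M[CC]_(n, p)) : adj (A *m B) = adj B *m adj A.
Proof.
apply/matrixP => i j; rewrite !mxE rmorph_sum; apply: eq_bigr => k _.
by rewrite !mxE rmorphM mulrC.
Qed.

Lemma adjD m n (A B : 'M[CC]_(m, n)) : adj (A + B) = adj A + adj B.
Proof. by apply/matrixP => i j; rewrite !mxE rmorphD. Qed.

Lemma adjN m n (A : 'M[CC]_(m, n)) : adj (- A) = - adj A.
Proof. by apply/matrixP => i j; rewrite !mxE rmorphN. Qed.

Lemma adjZ m n (c : CC) (A : 'M[CC]_(m, n)) : adj (c *: A) = c^* *: adj A.
Proof. by apply/matrixP => i j; rewrite !mxE rmorphM. Qed.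

Lemma adj1 n : adj (1%:M : 'M[CC]_n) = 1%:M.
Proof.
by apply/matrixP => i j; rewrite !mxE eq_sym rmorph_nat.
Qed.

Lemma adj_kron m n p q (A : 'M[CC]_(m, n)) (B : 'M[CC]_(p, q)) :
  adj (kron A B) = kron (adj A) (adj B).
Proof. by apply/matrixP => i j; rewrite /kron !mxE rmorphM. Qed.

Lemma adj_block m1 m2 n1 n2 (A : 'M[CC]_(m1, n1)) (B : 'M[CC]_(m1, n2))
  (C : 'M[CC]_(m2, n1)) (D : 'M[CC]_(m2, n2)) :
  adj (block_mx A B C D) = block_mx (adj A) (adj C) (adj B) (adj D).
Proof. by rewrite /adj /mconj map_block_mx tr_block_mx. Qed.

Lemma adj_mconjT m n p (A : 'M[CC]_(m, n)) (B : 'M[CC]_(p, n)) :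
  adj (mconj A *m B^T) = mconj B *m A^T.
Proof.
rewrite adjM; congr (_ *m _); apply/matrixP => i j; rewrite !mxE //.
by rewrite conjCK.
Qed.

Lemma conj_tr n (A B : 'M[CC]_n) : (\tr (adj A *m B))^* = \tr (adj B *m A).
Proof.
rewrite /mxtrace rmorph_sum; apply: eq_bigr => i _.
by rewrite -[in RHS](adjK (adj B *m A)) adjM adjK !mxE.
Qed.

Lemma conj_inv_nat (n : nat) : ((n%:R : CC)^-1)^* = (n%:R)^-1.
Proof. by rewrite fmorphV rmorph_nat. Qed.

Lemma Hmat_herm d (X Y : 'M[CC]_d) : Hmat X Y = adj (Hmat X Y).
Proof.
rewrite /Hmat /H1 /H2 /H3 /H4 /fnorm2.
rewrite !adjD adjN !adjZ !adjD !adj_block !adjZ !adj_kron !adj_mconjT !adjM !adjK !adj1.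
by rewrite !conj_tr !conj_inv_nat.
Qed.

Lemma qf_blockQ n (A B C D : 'M[CC]_n) (u w : 'cV[CC]_n) :
  qf (block_mx A B C D) (col_mx u w) (col_mx u w) = qf A u u + qf B u w + qf C w u + qf D w w.
Proof. exact: qf_block. Qed.

Lemma diag_lin d (al be : CC) (a b : 'rV[CC]_d) :
  al *: diag_mx a + be *: diag_mx b = diag_mx (al *: a + be *: b).
Proof.
apply/matrixP => i j; rewrite !mxE; case: (i == j); by rewrite ?mulr1n ?mulr0n ?mulr0 ?addr0.
Qed.

Lemma zero_cV n (x : 'cV[CC]_n) : (forall r, x r 0 = 0) -> x = 0.
Proof. by move=> h; apply/matrixP => r c; rewrite (ord1 c) h mxE. Qed.

Theorem theorem5p1 (d : nat) (X Y : 'M[CC]_d) :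
  (3 <= d)%N -> is_diag_mx X -> is_diag_mx Y -> generic_pair X Y ->
  posdef (Hmat X Y).
Proof.
move=> d3 dX dY [lin [al [be hdet]]].
move/diag_mxP: dX => [a eX]; move/diag_mxP: dY => [b eY]; subst X Y.
split; first exact: Hmat_herm.
move=> v nz.
have G1 : forall j, (a 0 j != 0) || (b 0 j != 0).
  move=> j; apply: contraT; rewrite negb_or !negbK => /andP [/eqP aj /eqP bj].
  move: hdet; rewrite diag_lin det_diag => /negbTE <-; apply/prodf_eq0.
  by exists j => //; rewrite !mxE aj bj !mulr0 addr0.
have G2 : forall al be, (forall j, a 0 j * al + b 0 j * be = 0) -> al = 0 /\ be = 0.
  move=> x y h; apply: lin; apply/matrixP => i j; rewrite !mxE.
  case: eqP => [-> | _]; last by rewrite !mulr0n !mulr0 addr0.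
  by rewrite !mulr1n mulrC [y * _]mulrC h.
have -> : (adj v *m Hmat (diag_mx a) (diag_mx b) *m v) 0 0 = qf (Hmat (diag_mx a) (diag_mx b)) v v by [].
rewrite /Hmat qf_lin -[v]vsubmxK /H1 /H2 /H3 /H4 /fnorm2 !qf_blockQ.
rewrite !H1part !H2part !H3part !qf_colstack combine Qdecomp.
rewrite lt_def Q_ge0 andbT; apply/eqP => /Q_eq0 [Hz Hs].
have := key_zero d3 G1 G2 Hz Hs => H0.
move/negP: nz; apply; apply/eqP; rewrite -[v]vsubmxK.
have -> : usubmx v = 0.
  apply: zero_cV => r; case: (mxtens_indexP r) => i k; exact: (H0 i k).1.
have -> : dsubmx v = 0.
  apply: zero_cV => r; case: (mxtens_indexP r) => i k; exact: (H0 i k).2.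
by rewrite col_mx0.
Qed.
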